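(* For all $n,m\ge1$, $c_n\,c_m\le c_{n+m}$. More precisely, the map $\mathcal C_n(321)\times\mathcal C_m(321)\to\mathcal C_{n+m}(321)$, $(\tau,\sigma)\mapsto\theta^{-1}(\hat\tau\odot\hat\sigma)$, is injective.
   Context: Permutations are written in one-line notation. A permutation contains $321$ if there are $i<j<k$ with $\pi_i>\pi_j>\pi_k$. $\mathcal C_n$ is the set of cyclic permutations of $[n]$, $\mathcal C_n(321)$ those avoiding $321$, and $c_n=|\mathcal C_n(321)|$. The standard cycle notation of $\pi$ writes each cycle with its largest element first, as $(m,\pi(m),\pi^2(m),\dots)$, and lists cycles in increasing order of their largest elements. $\theta:S_n\to S_n$ erases the parentheses of the standard cycle notation to give a one-line word; $\hat\pi=\theta(\pi)$. For $\sigma\in\mathcal C_n(321)$, $\tau\in\mathcal C_m(321)$ and $k$ with $\hat\tau_k=1$: $\hat\tau\odot\hat\sigma=(\hat\tau_1+n)\cdots(\hat\tau_k+n)\,\hat\sigma_1\cdots\hat\sigma_n\,(\hat\tau_{k+1}+n)\cdots(\hat\tau_m+n)$; it is known (and may be used) that $\theta^{-1}(\hat\tau\odot\hat\sigma)\in\mathcal C_{n+m}(321)$. *)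

(* Defs.v *)
(* Permutations of [n] = {1,...,n} are represented in one-line notation as
   sequences s : seq nat with perm_eq s (iota 1 n); pi(i) = s_i. *)
From mathcomp Require Import all_boot.
Set Implicit Arguments. Unset Strict Implicit. Unset Printing Implicit Defensive.

Definition is_perm (n : nat) (s : seq nat) : bool := perm_eq s (iota 1 n).

Definition papp (s : seq nat) (i : nat) : nat := nth 0 s i.-1.

Definition cyclicb (n : nat) (s : seq nat) : bool :=
  is_perm n s &&
  all (fun j => has (fun k => iter k (papp s) 1 == j) (iota 0 n)) (iota 1 n).

Definition contains321 (s : seq nat) : bool :=
  has (fun i => has (fun j => has (fun k =>
         [&& i < j, j < k, nth 0 s j < nth 0 s i & nth 0 s k < nth 0 s j])
       (iota 0 (size s))) (iota 0 (size s))) (iota 0 (size s)).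

Definition avoids321 (s : seq nat) : bool := ~~ contains321 s.

Definition C321 (n : nat) (s : seq nat) : bool := cyclicb n s && avoids321 s.

Definition c (n : nat) : nat := count (C321 n) (permutations (iota 1 n)).

Definition cyc_len (s : seq nat) (x : nat) : nat :=
  (find (fun k => iter k.+1 (papp s) x == x) (iota 0 (size s))).+1.

Definition cyc (s : seq nat) (x : nat) : seq nat :=
  traject (papp s) x (cyc_len s x).

Definition cyc_max (s : seq nat) (x : nat) : bool :=
  all (fun y => y <= x) (cyc s x).

(* standard cycle notation, parentheses erased: each cycle starts with its
   largest element; cycles listed by increasing largest elements *)
Definition theta (s : seq nat) : seq nat :=
  flatten [seq cyc s x | x <- iota 1 (size s) & cyc_max s x].

(* --- theta^{-1}: cut the word before each left-to-right maximum --- *)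

(* maximum of the first i+1 letters of w (the current cycle's leader) *)
Definition premax (w : seq nat) (i : nat) : nat := foldr maxn 0 (take i.+1 w).

Definition theta_inv_next (w : seq nat) (i : nat) : nat :=
  if (i.+1 < size w) && (nth 0 w i.+1 < premax w i)
  then nth 0 w i.+1 else premax w i.

Definition theta_inv (w : seq nat) : seq nat :=
  [seq theta_inv_next w (index x w) | x <- iota 1 (size w)].

Definition odot (th sh : seq nat) : seq nat :=
  let n := size sh in
  let k := (index 1 th).+1 in
  [seq t + n | t <- take k th] ++ sh ++ [seq t + n | t <- drop k th].

Definition glue (tau sigma : seq nat) : seq nat :=
  theta_inv (odot (theta tau) (theta sigma)).

(* Main.v *)
Require Import Defs.
From mathcomp Require Import all_boot zify.
Set Implicit Arguments. Unset Strict Implicit. Unset Printing Implicit Defensive.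

Lemma isPermP n s : is_perm n s ->
  [/\ size s = n, uniq s & forall x, (x \in s) = (0 < x <= n)].
Proof.
move=> P; split.
- by rewrite (perm_size P) size_iota.
- by rewrite (perm_uniq P) iota_uniq.
- by move=> x; rewrite (perm_mem P) mem_iota; lia.
Qed.

Lemma my_papp_in n s x : is_perm n s -> 0 < x <= n -> 0 < papp s x <= n.
Proof.
case/isPermP=> sz _ mem xn; rewrite -mem /papp; apply: mem_nth; rewrite sz; lia.
Qed.

Lemma my_papp_inj n s x y : is_perm n s -> 0 < x <= n -> 0 < y <= n ->
  papp s x = papp s y -> x = y.
Proof.
case/isPermP=> sz u _ xn yn; rewrite /papp => /eqP.
rewrite nth_uniq ?sz //; [move/eqP; lia | lia | lia].
Qed.

Lemma my_iter_in n s x k : is_perm n s -> 0 < x <= n -> 0 < iter k (papp s) x <= n.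
Proof. move=> P xn; elim: k => //= k IH; exact: my_papp_in. Qed.

Lemma my_iter_mult T (f : T -> T) n x q : iter n f x = x -> iter (q * n) f x = x.
Proof. move=> H; elim: q => // q IH; by rewrite mulSn iterD IH H. Qed.

Lemma my_iter_mod T (f : T -> T) n x k : iter n f x = x -> iter k f x = iter (k %% n) f x.
Proof. move=> H; by rewrite {1}(divn_eq k n) addnC iterD my_iter_mult. Qed.

Lemma my_mod2 a N : a < N + N -> a %% N = if a < N then a else a - N.
Proof.
move=> h; case: ifP => h2; first by rewrite modn_small.
have -> : a = (a - N) + N by lia.
rewrite modnDr modn_small; lia.
Qed.

Lemma cyc_lemma n s x : cyclicb n s -> 0 < x <= n ->
  [/\ iter n (papp s) x = x, uniq (traject (papp s) x n)
    & forall y, (y \in traject (papp s) x n) = (0 < y <= n)].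
Proof.
case/andP=> P /allP A xn; set f := papp s.
have orb j : 0 < j <= n -> exists2 k, k < n & iter k f 1 = j.
  move=> jn; have := A j; rewrite mem_iota => /(_ ltac:(lia)) /hasP [k].
  by rewrite mem_iota => kn /eqP e; exists k => //; lia.
have sub1 : {subset iota 1 n <= traject f 1 n}.
  move=> j; rewrite mem_iota => jn; apply/trajectP.
  case: (orb j ltac:(lia)) => k kn e; by exists k.
have [sz1 eq1] := uniq_min_size (iota_uniq 1 n) sub1 ltac:(by rewrite size_traject size_iota).
have u1 : uniq (traject f 1 n).
  by rewrite (uniq_size_uniq (iota_uniq 1 n) eq1) sz1.
have in1 k : 0 < iter k f 1 <= n by apply: (my_iter_in _ P); lia.
have inj1 i j : i < n -> j < n -> iter i f 1 = iter j f 1 -> i = j.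
  move=> i_n j_n e; move/(uniqP 1): u1 => /(_ i j); rewrite !inE size_traject.
  move=> /(_ i_n j_n); rewrite !nth_traject //; exact.


have per1 : iter n f 1 = 1.
  case: (orb (iter n f 1) (in1 n)) => k kn e.
  case: k kn e => [//|k] kn e.
  have e' : iter k.+1 f 1 = iter (n.-1).+1 f 1 by rewrite prednK //; lia.
  move: e'; rewrite !iterS => /(my_papp_inj P (in1 _) (in1 _)) e'.
  have := inj1 k n.-1 ltac:(lia) ltac:(lia) e'; lia.
have [p pn ep] := orb x xn.
have itx k : iter k f x = iter ((k + p) %% n) f 1.
  by rewrite -ep -iterD -my_iter_mod.
have perx : iter n f x = x by rewrite itx modnDl -my_iter_mod.
have ux : uniq (traject f x n).
  apply/(uniqP x) => i j; rewrite !inE size_traject => i_n j_n.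
  rewrite !nth_traject // !itx => /inj1.
  rewrite !my_mod2; try lia.
  move=> H; have := H ltac:(case: ifP; lia) ltac:(case: ifP; lia).
  case: ifP; case: ifP; lia.
split => // y; apply/idP/idP.
- by case/trajectP => k _ ->; apply: (my_iter_in _ P).
- move=> yn; have sub : {subset traject f x n <= iota 1 n}.
    move=> z /trajectP [k _ ->]; rewrite mem_iota add1n ltnS; exact: my_iter_in.
  have szl : size (iota 1 n) <= size (traject f x n) by rewrite size_traject size_iota.
  have [_ e] := uniq_min_size ux sub szl.
  by rewrite e mem_iota; lia.
Qed.

Lemma find_iota_last (P : pred nat) N : 0 < N -> P N.-1 ->
  (forall k, k < N.-1 -> ~~ P k) -> find P (iota 0 N) = N.-1.
Proof.
move=> N0 PN nP.
have hP : has P (iota 0 N) by apply/hasP; exists N.-1 => //; rewrite mem_iota; lia.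
have fl : find P (iota 0 N) < N by move: hP; rewrite has_find size_iota.
case: (ltngtP (find P (iota 0 N)) N.-1) => // h.
- have := nth_find 0 hP; rewrite nth_iota //; first by rewrite add0n (negbTE (nP _ h)).
- have := before_find 0 h; rewrite nth_iota ?add0n ?PN //; lia.
Qed.

Lemma cyc_len_cyc n s x : cyclicb n s -> 0 < x <= n -> cyc_len s x = n.
Proof.
move=> C xn; case: (cyc_lemma C xn) => per u _.
have P : is_perm n s by case/andP: C.
case: (isPermP P) => sz _ _.
rewrite /cyc_len sz find_iota_last; try lia.
- by rewrite prednK ?per ?eqxx //; lia.
- move=> k kn; apply/negP => /eqP e.
  move/(uniqP x): u => /(_ k.+1 0); rewrite !inE size_traject => /(_ ltac:(lia) ltac:(lia)).
  rewrite !nth_traject //=; try lia. move=> /(_ e); lia.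
Qed.

Lemma theta_cyc n s : cyclicb n s -> 0 < n -> theta s = traject (papp s) n n.
Proof.
move=> C n0.
have P : is_perm n s by case/andP: C.
case: (isPermP P) => sz _ _.
have cm x : 0 < x <= n -> cyc_max s x = (x == n).
  move=> xn; case: (cyc_lemma C xn) => _ _ mem.
  rewrite /cyc_max /cyc (cyc_len_cyc C xn).
  apply/idP/idP.
  - move/allP => /(_ n); rewrite mem => /(_ ltac:(lia)) h; apply/eqP; lia.
  - move/eqP => xe; apply/allP => y; rewrite mem; lia.
rewrite /theta sz.
have -> : [seq x <- iota 1 n | cyc_max s x] = [seq x <- iota 1 n | pred1 n x].
  apply: eq_in_filter => x; rewrite mem_iota => xn; rewrite cm //; lia.
rewrite filter_pred1_uniq ?iota_uniq //; last by rewrite mem_iota; lia.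
transitivity (cyc s n ++ [::]); first by [].
by rewrite cats0 /cyc (cyc_len_cyc C) // n0 leqnn.
Qed.

Lemma my_foldr_le N t : (forall y, y \in t -> y <= N) -> foldr maxn 0 t <= N.
Proof.
elim: t => //= a t IH H; rewrite geq_max H ?inE ?eqxx //=.
by apply: IH => y yt; apply: H; rewrite inE yt orbT.
Qed.

Lemma my_foldr_ge N t : N \in t -> N <= foldr maxn 0 t.
Proof.
elim: t => //= a t IH; rewrite inE leq_max => /orP [/eqP ->|/IH ->]; by rewrite ?leqnn ?orbT.
Qed.

Lemma my_foldr_max N t : (forall y, y \in t -> y <= N) -> N \in t -> foldr maxn 0 t = N.
Proof. move=> H1 H2; apply/eqP; rewrite eqn_leq my_foldr_le ?my_foldr_ge //. Qed.

Section TI.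
Variables (W : seq nat) (N : nat).
Hypothesis (PW : perm_eq W (iota 1 N)) (W0 : nth 0 W 0 = N) (N0 : 0 < N).

Lemma W_mem x : (x \in W) = (0 < x <= N).
Proof. by rewrite (perm_mem PW) mem_iota; lia. Qed.

Lemma W_size : size W = N.
Proof. by rewrite (perm_size PW) size_iota. Qed.

Lemma W_uniq : uniq W.
Proof. by rewrite (perm_uniq PW) iota_uniq. Qed.

Lemma W_nth_in i : i < N -> 0 < nth 0 W i <= N.
Proof. by move=> iN; rewrite -W_mem mem_nth // W_size. Qed.

Lemma premax_N i : premax W i = N.
Proof.
rewrite /premax; apply: my_foldr_max.
- by move=> y /mem_take; rewrite W_mem; lia.
- rewrite -{1}W0 -(nth_take 0 (ltn0Sn i)); apply: mem_nth.
  rewrite size_take W_size; case: ifP; lia.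
Qed.

Lemma thinv_next i : i < N -> theta_inv_next W i = nth 0 W (i.+1 %% N).
Proof.
move=> iN; rewrite /theta_inv_next premax_N W_size.
case: (ltnP i.+1 N) => h /=.
- rewrite modn_small //.
  have : nth 0 W i.+1 != nth 0 W 0.
    by rewrite nth_uniq ?W_size ?W_uniq.
  have := W_nth_in h; rewrite W0 => h1 h2; case: ifP => //; lia.
- have -> : i.+1 = N by lia. by rewrite modnn W0.
Qed.

Lemma thinv_nth q : q < N ->
  nth 0 (theta_inv W) q = nth 0 W ((index q.+1 W).+1 %% N).
Proof.
move=> qN; rewrite /theta_inv (nth_map 0) ?size_iota ?W_size // nth_iota // add1n.
apply: thinv_next; rewrite -W_size index_mem W_mem; lia.
Qed.

Lemma thinv_size : size (theta_inv W) = N.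
Proof. by rewrite size_map size_iota W_size. Qed.

Lemma my_succ_mod i : i < N -> i.+1 %% N = if i.+1 == N then 0 else i.+1.
Proof. move=> iN; case: eqP => [->|h]; first by rewrite modnn. rewrite modn_small //; lia. Qed.

Lemma cyc_of_W E : size E = N ->
  (forall i, i < N -> nth 0 E (nth 0 W i).-1 = nth 0 W (i.+1 %% N)) ->
  cyclicb N E.
Proof.
move=> sE K.
have KF i : i < N -> papp E (nth 0 W i) = nth 0 W (i.+1 %% N) by move/K.
have iterF k i : i < N -> iter k (papp E) (nth 0 W i) = nth 0 W ((i + k) %% N).
  move=> iN; elim: k => [|k IH]; first by rewrite addn0 modn_small.
  rewrite iterS IH KF ?ltn_pmod //.
  by rewrite -addn1 modnDml addn1 addnS.
have idx x : 0 < x <= N -> index x W < N /\ nth 0 W (index x W) = x.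
  move=> xN; rewrite -{1}W_size index_mem W_mem xN nth_index // W_mem //.
have EW x : x < N -> nth 0 E x = nth 0 W ((index x.+1 W).+1 %% N).
  move=> xN; have [a1 a2] := idx x.+1 ltac:(lia).
  by rewrite -KF // a2.
have uE : uniq E.
  apply/(uniqP 0) => x y; rewrite !inE sE => xN yN.
  rewrite !EW //; move/eqP; rewrite nth_uniq ?W_size ?W_uniq ?ltn_pmod //.
  have [a1 a2] := idx x.+1 ltac:(lia). have [b1 b2] := idx y.+1 ltac:(lia).
  rewrite !my_succ_mod //; move=> h.
  have e : index x.+1 W = index y.+1 W.
    move: h; case: ((index x.+1 W).+1 =P N); case: ((index y.+1 W).+1 =P N); lia.
  by move: a2; rewrite e b2 => -[].
have subE : {subset E <= iota 1 N}.
  move=> y /(nthP 0) [x xN <-]; rewrite sE in xN; rewrite EW // mem_iota.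
  have := W_nth_in (ltn_pmod (index x.+1 W).+1 N0); lia.
have [_ eqE] := uniq_min_size uE subE ltac:(by rewrite size_iota sE).
have PE : is_perm N E by apply: uniq_perm => //; rewrite iota_uniq.
rewrite /cyclicb PE /=; apply/allP => j; rewrite mem_iota => jN.
have [q1 q2] := idx j ltac:(lia). have [o1 o2] := idx 1 ltac:(lia).
apply/hasP; exists (((index j W) + (N - index 1 W)) %% N).
  by rewrite mem_iota add0n ltn_pmod.
have h := iterF (((index j W) + (N - index 1 W)) %% N) (index 1 W) o1.
rewrite o2 in h; rewrite h modnDmr.
have -> : index 1 W + (index j W + (N - index 1 W)) = index j W + N by lia.
by rewrite modnDr modn_small // q2.
Qed.

End TI.

Definition Eseq (n : nat) (tau sigma : seq nat) : seq nat :=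
  [seq (if x == n then head 0 tau + n else x) | x <- sigma] ++
  n :: [seq y + n | y <- behead tau].

Lemma smod i N : i < N -> i.+1 %% N = if i.+1 == N then 0 else i.+1.
Proof. move=> iN; case: eqP => [->|h]; first by rewrite modnn. rewrite modn_small //; lia. Qed.

Section Constr.
Variables (n m : nat) (sigma tau : seq nat).
Hypotheses (Cs : cyclicb n sigma) (Ct : cyclicb m tau) (n0 : 0 < n) (m0 : 0 < m).

Let f := papp sigma.
Let g := papp tau.
Let Ss := traject f n n.
Let Tt := traject g m m.
Let p := index 1 Tt.
Let W := odot Tt Ss.
Let N := n + m.

Let Ps : is_perm n sigma. Proof. by case/andP: Cs. Qed.
Let Pt : is_perm m tau. Proof. by case/andP: Ct. Qed.

Let cS := cyc_lemma Cs (ltac:(lia) : 0 < n <= n).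
Let cT := cyc_lemma Ct (ltac:(lia) : 0 < m <= m).

Let perS : iter n f n = n. Proof. by case: cS. Qed.
Let uS : uniq Ss. Proof. by case: cS. Qed.
Let memS y : (y \in Ss) = (0 < y <= n). Proof. by case: cS. Qed.
Let perT : iter m g m = m. Proof. by case: cT. Qed.
Let uT : uniq Tt. Proof. by case: cT. Qed.
Let memT y : (y \in Tt) = (0 < y <= m). Proof. by case: cT. Qed.

Let nthS i : i < n -> nth 0 Ss i = iter i f n.
Proof. by move=> h; rewrite (set_nth_default n) ?size_traject // nth_traject. Qed.
Let nthT i : i < m -> nth 0 Tt i = iter i g m.
Proof. by move=> h; rewrite (set_nth_default m) ?size_traject // nth_traject. Qed.

Let pm : p < m.
Proof.
have h : index 1 Tt < size Tt by rewrite index_mem memT; lia.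
by rewrite size_traject in h.
Qed.
Let iterp : iter p g m = 1.
Proof. by rewrite -nthT // nth_index // memT; lia. Qed.

Let iterS_in i : 0 < iter i f n <= n. Proof. have h : 0 < n <= n by lia. exact: (my_iter_in i Ps h). Qed.
Let iterT_in i : 0 < iter i g m <= m. Proof. have h : 0 < m <= m by lia. exact: (my_iter_in i Pt h). Qed.

Let injS i j : i < n -> j < n -> iter i f n = iter j f n -> i = j.
Proof.
move=> hi hj e; move/(uniqP 0): uS => /(_ i j); rewrite !inE size_traject.
by rewrite !nthS // => /(_ hi hj e).
Qed.
Let injT i j : i < m -> j < m -> iter i g m = iter j g m -> i = j.
Proof.
move=> hi hj e; move/(uniqP 0): uT => /(_ i j); rewrite !inE size_traject.
by rewrite !nthT // => /(_ hi hj e).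
Qed.

Let Wdef : W = [seq t + n | t <- take p.+1 Tt] ++ Ss ++ [seq t + n | t <- drop p.+1 Tt].
Proof. by rewrite /W /odot size_traject. Qed.

Let szA : size [seq t + n | t <- take p.+1 Tt] = p.+1.
Proof. rewrite size_map size_take size_traject; case: ifP; lia. Qed.

Lemma nthW1 i : i <= p -> nth 0 W i = iter i g m + n.
Proof.
move=> ip; rewrite Wdef nth_cat szA ltnS ip (nth_map 0) ?size_take ?size_traject.
  by rewrite nth_take // nthT //; lia.
case: ifP; lia.
Qed.

Lemma nthW2 j : j < n -> nth 0 W (p.+1 + j) = iter j f n.
Proof.
move=> jn; rewrite Wdef nth_cat szA ltnNge leq_addr /= addKn nth_cat size_traject jn.
exact: nthS.
Qed.

Lemma nthW3 r : p < r < m -> nth 0 W (r + n) = iter r g m + n.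
Proof.
move=> rr; rewrite Wdef nth_cat szA ifF; last lia.
rewrite nth_cat size_traject ifF; last lia.
rewrite (nth_map 0) ?size_drop ?size_traject; last lia.
rewrite nth_drop nthT; last lia.
by have -> : p.+1 + (r + n - p.+1 - n) = r by lia.
Qed.

Lemma W0 : nth 0 W 0 = N.
Proof. by rewrite nthW1 // /N addnC. Qed.

Lemma PW : perm_eq W (iota 1 N).
Proof.
rewrite Wdef perm_catCA -map_cat cat_take_drop /N iotaD.
apply: perm_cat.
- apply: uniq_perm => //; first exact: iota_uniq.
  by move=> y; rewrite memS mem_iota; lia.
- have -> : 1 + n = n + 1 by rewrite addnC.
  rewrite iotaDl (eq_map (fun y => addnC y n)); apply: perm_map.
  apply: uniq_perm => //; first exact: iota_uniq.
  by move=> y; rewrite memT mem_iota; lia.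
Qed.

Let E := Eseq n tau sigma.
Let szs : size sigma = n. Proof. by case: (isPermP Ps). Qed.
Let szt : size tau = m. Proof. by case: (isPermP Pt). Qed.
Let hd : head 0 tau = g 1. Proof. by rewrite /g /papp /= nth0. Qed.

Lemma En1 v : 0 < v <= n -> nth 0 E v.-1 = (if f v == n then g 1 + n else f v).
Proof.
move=> vn; rewrite /E /Eseq nth_cat size_map szs ifT; last lia.
rewrite (nth_map 0) ?szs; last lia. by rewrite hd.
Qed.

Lemma En2 : nth 0 E n = n.
Proof. by rewrite /E /Eseq nth_cat size_map szs ltnn subnn. Qed.

Lemma En3 v : n.+1 < v <= N -> nth 0 E v.-1 = g (v - n) + n.
Proof.
move=> vn; rewrite /E /Eseq nth_cat size_map szs ifF; last lia.
have -> : v.-1 - n = (v - n - 2).+1 by lia.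
rewrite /= (nth_map 0) ?size_behead ?szt; last by rewrite /N in vn; lia.
rewrite nth_behead /g /papp; congr (nth _ _ _ + _); lia.
Qed.

Lemma Esize : size E = N.
Proof. by rewrite /E /Eseq size_cat size_map /= size_map size_behead szs szt /N; lia. Qed.

Lemma KE i : i < N -> nth 0 E (nth 0 W i).-1 = nth 0 W (i.+1 %% N).
Proof.
move=> iN; have NN : N = n + m by [].
case: (ltngtP i p) => ip.
- rewrite nthW1; last lia.
  have y1 : iter i g m != 1.
    apply/eqP; rewrite -iterp => /injT; move=> /(_ ltac:(lia) ltac:(lia)); lia.
  have := iterT_in i => yin.
  rewrite En3; last by rewrite /N; move: y1; lia.
  rewrite addnK -iterS smod // ifF; last lia.
  by rewrite nthW1.
-
  case: (ltnP i (p.+1 + n)) => ipn.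
  + have -> : i = p.+1 + (i - p.+1) by lia.
    set j := i - p.+1.
    rewrite nthW2; last lia.
    rewrite En1 ?iterS_in // -iterS.
    case: (ltnP j.+1 n) => jn.
    * have ne : iter j.+1 f n != n.
        apply/eqP => e; have := injS jn n0 (e : iter j.+1 f n = iter 0 f n); lia.
      rewrite (negbTE ne) smod ?ifF; try lia.
      by rewrite -addnS nthW2.
    * have jn' : j.+1 = n by lia.
      rewrite jn' perS eqxx.
      case: (ltnP p.+1 m) => pm'.
      - rewrite smod ?ifF; try lia.
        have -> : (p.+1 + j).+1 = p.+1 + n by lia.
        by rewrite nthW3 ?iterS ?iterp //; lia.
      - have e : (p.+1 + j).+1 = N by lia.
        rewrite e modnn W0 /N.
        have : iter p.+1 g m = m by have -> : p.+1 = m by lia.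
        rewrite iterS iterp => ->; lia.
  + set r := i - n.
    have -> : i = r + n by lia.
    rewrite nthW3; last lia.
    have y1 : iter r g m != 1.
      apply/eqP; rewrite -iterp => /injT; move=> /(_ ltac:(lia) ltac:(lia)); lia.
    have := iterT_in r => yin.
    rewrite En3; last by rewrite /N; move: y1; lia.
    rewrite addnK -iterS.
    case: (ltnP r.+1 m) => rm.
    * rewrite smod ?ifF; try lia.
      by rewrite -addSn nthW3 //; lia.
    * have e : (r + n).+1 = N by lia.
      have rm' : r.+1 = m by lia.
      by rewrite e modnn W0 rm' perT /N addnC.
- subst i; rewrite nthW1 // iterp add1n /= En2 smod ?ifF; try lia.
  by rewrite -[p.+1]addn0 nthW2.
Qed.

End Constr.

Lemma c321_of s i j k : i < j -> j < k -> k < size s ->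
  nth 0 s j < nth 0 s i -> nth 0 s k < nth 0 s j -> contains321 s.
Proof.
move=> ij jk ks h1 h2; apply/hasP; exists i; first by rewrite mem_iota; lia.
apply/hasP; exists j; first by rewrite mem_iota; lia.
apply/hasP; exists k; first by rewrite mem_iota; lia.
by rewrite ij jk h1 h2.
Qed.

Lemma c321_to s : contains321 s -> exists i j k, [/\ i < j, j < k, k < size s,
  nth 0 s j < nth 0 s i & nth 0 s k < nth 0 s j].
Proof.
case/hasP => i _ /hasP [j _ /hasP [k]]; rewrite mem_iota => kk /and4P [h1 h2 h3 h4].
exists i, j, k; split => //; lia.
Qed.

Section Av.
Variables (n m : nat) (sigma tau : seq nat).
Hypotheses (szs : size sigma = n) (szt : size tau = m) (n0 : 0 < n) (m0 : 0 < m)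
  (Ps : forall q, q < n -> 0 < nth 0 sigma q <= n)
  (Pt : forall q, q < m -> 0 < nth 0 tau q <= m)
  (us : uniq sigma) (As : avoids321 sigma) (At : avoids321 tau).

Let E := Eseq n tau sigma.

Let Elt q : q < n -> nth 0 E q = if nth 0 sigma q == n then nth 0 tau 0 + n else nth 0 sigma q.
Proof. move=> qn; rewrite /E /Eseq nth_cat size_map szs qn (nth_map 0) ?szs // nth0 //. Qed.

Let Eeq : nth 0 E n = n.
Proof. by rewrite /E /Eseq nth_cat size_map szs ltnn subnn. Qed.

Let Egt q : n < q < n + m -> nth 0 E q = nth 0 tau (q - n) + n.
Proof.
move=> qn; rewrite /E /Eseq nth_cat size_map szs ifF; last lia.
have -> : q - n = (q - n).-1.+1 by lia.
rewrite /= (nth_map 0) ?size_behead ?szt; last lia.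
by rewrite nth_behead.
Qed.

Let sinj i j : i < n -> j < n -> nth 0 sigma i = nth 0 sigma j -> i = j.
Proof. by move=> hi hj /eqP; rewrite nth_uniq ?szs // => /eqP. Qed.

Lemma E_avoid : avoids321 E.
Proof.
apply/negP => /c321_to [i [j [k [ij jk kN h1 h2]]]].
have szE : size E = n + m.
  by rewrite /E /Eseq size_cat size_map /= size_map size_behead szs szt; lia.
rewrite szE in kN.
have t0 := Pt m0.
case: (ltnP k n) => kn.
- move: h1 h2; rewrite !Elt; try lia.
  have := @Ps i ltac:(lia); have := @Ps j ltac:(lia); have := @Ps k ltac:(lia).
  move=> hk hj hi.
  have : contains321 sigma -> False by move=> C; move/negP: As.
  move=> nC.
  do 3 case: eqP => ?; move=> h1 h2; apply: nC; apply: (c321_of (i:=i) (j:=j) (k:=k)); lia.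
case: (ltnP n i) => ni.
- move: h1 h2; rewrite !Egt; try lia.
  move=> h1 h2; move/negP: At; apply; apply: (c321_of (i:=i-n) (j:=j-n) (k:=k-n)); lia.
case: (ltnP i n) => ni'; last first.
- have ie : i = n by lia. subst i.
  move: h1; rewrite Eeq Egt; lia.
have Ek : n <= nth 0 E k.
  case: (ltnP n k) => nk; first by rewrite Egt; lia.
  have -> : k = n by lia. by rewrite Eeq.
move: h1; rewrite (Elt ni') => h1.
have si : nth 0 sigma i = n.
  move: h1; case: eqP => // _ h1; have := @Ps i ni'; lia.
rewrite si eqxx in h1.
case: (ltnP n j) => nj.
- move: h1 h2; rewrite !Egt; try lia.
  move=> h1 h2; move/negP: At; apply; apply: (c321_of (i:=0) (j:=j-n) (k:=k-n)); rewrite ?subnn; lia.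
- case: (ltnP j n) => jn.
  + move: h2; rewrite (Elt jn); case: eqP => [e|_] h2.
    * have := sinj ni' jn; rewrite si e => /(_ erefl); lia.
    * have := @Ps j jn; lia.
  + have je : j = n by lia. move: h2; rewrite je Eeq; lia.
Qed.

End Av.

Lemma glueE n m sigma tau : cyclicb n sigma -> cyclicb m tau -> 0 < n -> 0 < m ->
  glue tau sigma = Eseq n tau sigma.
Proof.
move=> Cs Ct n0 m0.
have N0 : 0 < n + m by lia.
have PW' := PW Cs Ct n0 m0. have W0' := W0 Cs Ct n0 m0.
rewrite /glue (theta_cyc Ct m0) (theta_cyc Cs n0).
apply: (eq_from_nth (x0:=0)); first by rewrite (thinv_size PW') (Esize Cs Ct n0 m0).
move=> q; rewrite (thinv_size PW') => qN.
rewrite (thinv_nth PW' W0' N0 qN).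
have mq : q.+1 \in odot (traject (papp tau) m m) (traject (papp sigma) n n).
  by rewrite (W_mem PW'); lia.
have iN : index q.+1 (odot (traject (papp tau) m m) (traject (papp sigma) n n)) < n + m.
  by rewrite -(W_size PW') index_mem.
by rewrite -(KE Cs Ct n0 m0 iN) nth_index.
Qed.

Lemma perm_facts n s : is_perm n s ->
  [/\ size s = n, uniq s & forall q, q < n -> 0 < nth 0 s q <= n].
Proof.
case/isPermP => sz u mem; split => // q qn.
by rewrite -mem mem_nth // sz.
Qed.

Lemma C321_glue n m sigma tau : 0 < n -> 0 < m -> C321 n sigma -> C321 m tau ->
  C321 (n + m) (glue tau sigma).
Proof.
move=> n0 m0 /andP [Cs As] /andP [Ct At].
rewrite (glueE Cs Ct n0 m0) /C321.
have N0 : 0 < n + m by lia.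
rewrite (cyc_of_W (PW Cs Ct n0 m0) (W0 Cs Ct n0 m0) N0 (Esize Cs Ct n0 m0)
  (fun i => @KE n m sigma tau Cs Ct n0 m0 i)) /=.
have [szs us Ps] := perm_facts (andP Cs).1.
have [szt _ Pt] := perm_facts (andP Ct).1.
exact: (E_avoid szs szt n0 m0 Ps Pt us As At).
Qed.

Lemma Einj n m s1 s2 t1 t2 : 0 < n -> 0 < m ->
  is_perm n s1 -> is_perm n s2 -> is_perm m t1 -> is_perm m t2 ->
  Eseq n t1 s1 = Eseq n t2 s2 -> t1 = t2 /\ s1 = s2.
Proof.
move=> n0 m0 P1 P2 Q1 Q2 /eqP; rewrite /Eseq eqseq_cat; last first.
  by rewrite !size_map (perm_size P1) (perm_size P2).
have [sz1 _ V1] := perm_facts P1; have [sz2 _ V2] := perm_facts P2.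
have [tz1 _ U1] := perm_facts Q1; have [tz2 _ U2] := perm_facts Q2.
case/andP => /eqP hs /eqP [] /eqP ht.
have hnth q : q < n -> (if nth 0 s1 q == n then head 0 t1 + n else nth 0 s1 q) =
                       (if nth 0 s2 q == n then head 0 t2 + n else nth 0 s2 q).
  by move=> qn; rewrite -!(nth_map 0 0 (fun x => if x == n then head 0 _ + n else x)) ?sz1 ?sz2 // hs.
have h01 : 0 < head 0 t1 by rewrite -nth0; have := U1 0 m0; lia.
have h02 : 0 < head 0 t2 by rewrite -nth0; have := U2 0 m0; lia.
have es : s1 = s2.
  apply: (eq_from_nth (x0:=0)); first by rewrite sz1 sz2.
  move=> q; rewrite sz1 => qn; have := hnth q qn; have := V1 q qn; have := V2 q qn.
  by do 2 case: eqP => ?; lia.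
subst s2.
have hh : head 0 t1 = head 0 t2.
  have nin : n \in s1 by rewrite (perm_mem P1) mem_iota; lia.
  have iN : index n s1 < n by rewrite -[X in _ < X]sz1 index_mem.
  have := hnth _ iN; rewrite nth_index // eqxx; lia.
split => //.
have bb : behead t1 = behead t2.
  apply: (eq_from_nth (x0:=0)); first by rewrite !size_behead tz1 tz2.
  move=> q; rewrite size_behead => ql.
  move/eqP: ht => ht; have := congr1 (nth 0 ^~ q) ht.
  by rewrite !(nth_map 0) ?size_behead ?tz1 ?tz2 //; lia.
clear hs; case: t1 t2 tz1 tz2 hh bb {Q1 Q2 U1 U2 h01 h02 ht hnth} => [|a t1] [|b t2] //=; try lia.
by move=> _ _ -> ->.
Qed.

Lemma injective_part n m : 1 <= n -> 1 <= m ->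
  forall (sigma1 sigma2 tau1 tau2 : seq nat),
     C321 n sigma1 -> C321 n sigma2 -> C321 m tau1 -> C321 m tau2 ->
     glue tau1 sigma1 = glue tau2 sigma2 ->
     tau1 = tau2 /\ sigma1 = sigma2.
Proof.
move=> n0 m0 s1 s2 t1 t2 /andP [C1 _] /andP [C2 _] /andP [D1 _] /andP [D2 _].
rewrite (glueE C1 D1 n0 m0) (glueE C2 D2 n0 m0).
apply: (@Einj n m) => //; [case/andP: C1 | case/andP: C2 | case/andP: D1 | case/andP: D2] => //.
Qed.

Lemma count_part n m : 1 <= n -> 1 <= m -> c n * c m <= c (n + m).
Proof.
move=> n0 m0.
set A := [seq x <- permutations (iota 1 n) | C321 n x].
set B := [seq x <- permutations (iota 1 m) | C321 m x].
have cA : c n = size A by rewrite size_filter.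
have cB : c m = size B by rewrite size_filter.
rewrite cA cB -(size_allpairs (fun s t => glue t s)) /c -size_filter.
apply: uniq_leq_size.
- apply: allpairs_uniq; try exact/filter_uniq/permutations_uniq.
  move=> [s1 t1] [s2 t2] /allpairsP [[x1 y1] [/= hx1 hy1 [-> ->]]]
    /allpairsP [[x2 y2] [/= hx2 hy2 [-> ->]]] /= e.
  move: hx1 hy1 hx2 hy2; rewrite !mem_filter => /andP [h1 _] /andP [h2 _] /andP [h3 _] /andP [h4 _].
  by have [-> ->] := injective_part n0 m0 h1 h3 h2 h4 e.
- move=> z /allpairsP [[x y] [/= hx hy ->]].
  move: hx hy; rewrite !mem_filter => /andP [hx _] /andP [hy _].
  have C := C321_glue n0 m0 hx hy.
  rewrite C mem_permutations /=; by case/andP: C => /andP [].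
Qed.

Unset Implicit Arguments.

Theorem mainTheorem8 (n m : nat) :
  1 <= n -> 1 <= m ->
  c n * c m <= c (n + m) /\
  (forall (sigma1 sigma2 tau1 tau2 : seq nat),
     C321 n sigma1 -> C321 n sigma2 -> C321 m tau1 -> C321 m tau2 ->
     glue tau1 sigma1 = glue tau2 sigma2 ->
     tau1 = tau2 /\ sigma1 = sigma2).
Proof.
move=> n0 m0; split; first exact: count_part.
exact: injective_part.
Qed.
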